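(* Let $\delta>0$. If the distribution function $F$ of the conductances varies regularly at zero with index $\gamma>0$, then $\mathbb P$-a.s. for all $n$ large enough $\lambda_1^{(n)}\le n^{-\frac1{2\gamma}+\delta}$. If moreover $F(a)=a^\gamma$ for all $a\in[0,1]$, then for every $\epsilon>0$, $\mathbb P$-a.s. for all $n$ large enough $\lambda_1^{(n)}\le 2d\, n^{-\frac1{2\gamma}}\big((2+\epsilon)\log\log n\big)^{\frac1{2d\gamma}}$.
   Context: Let $d\ge 2$, $\mathfrak E_d$ the nearest-neighbour edges of $\mathbb Z^d$, $x\sim y$ if $|x-y|_1=1$. Conductances $(w_e)_{e\in\mathfrak E_d}$ are i.i.d. $(0,\infty)$-valued with law $\mathbb P$, and $F(u)=\mathbb P[w\le u]$. $B_n=[-n,n]^d\cap\mathbb Z^d$. $\mathcal E^{\boldsymbol w}(f)=\frac12\sum_{x}\sum_{y\sim x}w_{xy}(f(x)-f(y))^2$ and $\lambda_1^{(n)}=\inf\{\mathcal E^{\boldsymbol w}(f): f\in\ell^2(\mathbb Z^d)\text{ real},\ \mathrm{supp}\,f\subseteq B_n,\ \|f\|_2=1\}$ (principal Dirichlet eigenvalue of $-\mathcal L_{\boldsymbol w}$, $(\mathcal L_{\boldsymbol w}f)(x)=\sum_{y\sim x}w_{xy}(f(y)-f(x))$, in $B_n$). $F$ varies regularly at zero with index $\gamma$ if $F(u)=u^\gamma L(u)$ with $L(Cu)/L(u)\to1$ as $u\to0$ for all $C>0$. *)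

(* Defs.v *)
From Stdlib Require Import Reals ZArith List.
Import ListNotations.
Open Scope R_scope.

(* A point of Z^d is a list of d integers (the length is checked where needed). *)
Definition pt := list Z.

Fixpoint zrange_aux (a : Z) (k : nat) : list Z :=
  match k with O => [] | S k' => a :: zrange_aux (a + 1)%Z k' end.

Definition zrange (n : nat) : list Z := zrange_aux (- Z.of_nat n)%Z (2 * n + 1).

Fixpoint box (d n : nat) : list pt :=
  match d with
  | O => [ [] ]
  | S d' => flat_map (fun k => map (cons k) (box d' n)) (zrange n)
  end.

Definition in_box (d n : nat) (x : pt) : Prop :=
  length x = d /\ Forall (fun k => (- Z.of_nat n <= k <= Z.of_nat n)%Z) x.

Fixpoint incr (x : pt) (i : nat) : pt :=
  match x, i with
  | [], _ => []
  | k :: x', O => (k + 1)%Z :: x'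
  | k :: x', S i' => k :: incr x' i'
  end.

Definition sumR {A} (g : A -> R) (l : list A) : R := fold_right Rplus 0 (map g l).

(* Edges of Z^d are indexed by pairs (x, i), x in Z^d, i < d, standing for
   the edge {x, x + e_i}.  A conductance configuration is w : pt -> nat -> R. *)
Definition is_edge (d : nat) (e : pt * nat) : Prop :=
  length (fst e) = d /\ (snd e < d)%nat.

(* Dirichlet energy of f (supported in B_n):
   1/2 sum_x sum_{y~x} w_xy (f x - f y)^2 = sum over edges {x,x+e_i}.
   Every edge with an endpoint in B_n has its base point x in B_{n+1},
   so summing over x in B_{n+1} loses nothing. *)
Definition energy (d n : nat) (w : pt -> nat -> R) (f : pt -> R) : R :=
  sumR (fun x => sumR (fun i => w x i * (f (incr x i) - f x) ^ 2) (seq 0 d))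
       (box d (S n)).

Definition rayleigh_set (d n : nat) (w : pt -> nat -> R) (r : R) : Prop :=
  exists f : pt -> R,
    (forall x, ~ in_box d n x -> f x = 0) /\
    sumR (fun x => f x ^ 2) (box d n) = 1 /\
    r = energy d n w f.

Definition is_inf (S : R -> Prop) (m : R) : Prop :=
  (forall x, S x -> m <= x) /\ (forall m', (forall x, S x -> m' <= x) -> m' <= m).

Definition lambda1_le (d n : nat) (w : pt -> nat -> R) (b : R) : Prop :=
  forall l, is_inf (rayleigh_set d n w) l -> l <= b.

Record prob_space := {
  Omega : Type;
  event : (Omega -> Prop) -> Prop;
  event_full : event (fun _ => True);
  event_compl : forall A, event A -> event (fun o => ~ A o);
  event_cunion : forall A : nat -> Omega -> Prop,
      (forall k, event (A k)) -> event (fun o => exists k, A k o);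
  Pr : (Omega -> Prop) -> R;
  Pr_nonneg : forall A, event A -> 0 <= Pr A;
  Pr_full : Pr (fun _ => True) = 1;
  Pr_sigma_add : forall A : nat -> Omega -> Prop,
      (forall k, event (A k)) ->
      (forall j k o, j <> k -> A j o -> A k o -> False) ->
      infinite_sum (fun k => Pr (A k)) (Pr (fun o => exists k, A k o))
}.

Definition almost_surely (P : prob_space) (Q : Omega P -> Prop) : Prop :=
  exists E, event P E /\ Pr P E = 1 /\ forall o, E o -> Q o.

(* (w_e)_e are i.i.d., (0,oo)-valued, with distribution function F:
   for every finite family of distinct edges the joint distribution
   function is the product of F. *)
Definition iid_conductances (d : nat) (P : prob_space)
    (W : pt -> nat -> Omega P -> R) (F : R -> R) : Prop :=
  (forall x i o, is_edge d (x, i) -> 0 < W x i o) /\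
  (forall x i u, is_edge d (x, i) -> event P (fun o => W x i o <= u)) /\
  (forall (l : list (pt * nat)) (u : pt * nat -> R),
      NoDup l -> Forall (is_edge d) l ->
      Pr P (fun o => Forall (fun e => W (fst e) (snd e) o <= u e) l)
      = fold_right Rmult 1 (map (fun e => F (u e)) l)).

Definition regularly_varying_at_0 (F : R -> R) (gamma : R) : Prop :=
  exists L : R -> R,
    (forall u, 0 < u -> F u = Rpower u gamma * L u) /\
    (forall C, 0 < C -> forall eps, 0 < eps -> exists dl, 0 < dl /\
       forall u, 0 < u < dl -> Rabs (L (C * u) / L u - 1) < eps).

(* Main.v *)
Require Import Defs.
From Stdlib Require Import Reals ZArith List Lra Lia Psatz Permutation FunctionalExtensionality PropExtensionality Classical.
Import ListNotations.
Open Scope R_scope.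

Section Prob.
Variable P : prob_space.
Notation ev := (event P).
Notation Pr := (Pr P).

Lemma pred_ext (A B : Omega P -> Prop) : (forall o, A o <-> B o) -> A = B.
Proof. intro H; apply functional_extensionality; intro o; apply propositional_extensionality; auto. Qed.

Lemma ev_ext A B : (forall o, A o <-> B o) -> ev A -> ev B.
Proof. intros H; rewrite (pred_ext A B H); auto. Qed.

Lemma Pr_ext A B : (forall o, A o <-> B o) -> Pr A = Pr B.
Proof. intros H; rewrite (pred_ext A B H); auto. Qed.

Lemma ev_empty : ev (fun _ => False).
Proof. apply (ev_ext (fun o => ~ True)); [tauto| apply event_compl, event_full]. Qed.

Lemma Pr_empty : Pr (fun _ => False) = 0.
Proof.
  set (c := Pr (fun _ => False)).
  assert (H := Pr_sigma_add P (fun _ _ => False) (fun _ => ev_empty) (fun j k o _ h _ => h)); cbv beta in H.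
  rewrite (Pr_ext (fun o => exists k : nat, False) (fun _ => False)) in H
    by (intro o; split; [intros [_ h]; exact h| tauto]).
  fold c in H.
  assert (Hs : forall n, sum_f_R0 (fun _ => c) n = INR (S n) * c).
  { induction n; simpl sum_f_R0. simpl; ring. rewrite IHn. rewrite !S_INR. ring. }
  destruct (Req_dec c 0) as [h|h]; auto.
  destruct (H (Rabs c)) as [N HN]. apply Rabs_pos_lt; auto.
  specialize (HN (S N) ltac:(lia)). unfold R_dist in HN. rewrite Hs in HN.
  replace (INR (S (S N)) * c - c) with (INR (S N) * c) in HN by (rewrite (S_INR (S N)); ring).
  rewrite Rabs_mult, Rabs_right in HN by (apply Rle_ge, pos_INR).
  assert (1 <= INR (S N)) by (rewrite S_INR; pose proof (pos_INR N); lra).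
  assert (0 < Rabs c) by (apply Rabs_pos_lt; auto). nra.
Qed.

Definition seq2 (A B : Omega P -> Prop) (k : nat) : Omega P -> Prop :=
  match k with O => A | 1%nat => B | _ => fun _ => False end.

Lemma ev_or A B : ev A -> ev B -> ev (fun o => A o \/ B o).
Proof.
  intros hA hB. apply (ev_ext (fun o => exists k, seq2 A B k o)).
  - intro o; split. intros [[|[|k]] h]; simpl in h; tauto.
    intros [h|h]; [exists 0%nat| exists 1%nat]; exact h.
  - apply event_cunion. intros [|[|k]]; simpl; auto using ev_empty.
Qed.

Lemma ev_and A B : ev A -> ev B -> ev (fun o => A o /\ B o).
Proof.
  intros hA hB. apply (ev_ext (fun o => ~ (~ A o \/ ~ B o))).
  intro o; tauto. apply event_compl, ev_or; apply event_compl; auto.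
Qed.

Lemma ev_not A : ev A -> ev (fun o => ~ A o).
Proof. apply event_compl. Qed.

Lemma Pr_add2 A B : ev A -> ev B -> (forall o, A o -> B o -> False) ->
  Pr (fun o => A o \/ B o) = Pr A + Pr B.
Proof.
  intros hA hB hd.
  assert (H := Pr_sigma_add P (seq2 A B)).
  assert (H1 : forall k, ev (seq2 A B k)) by (intros [|[|k]]; simpl; auto using ev_empty).
  assert (H2 : forall j k o, j <> k -> seq2 A B j o -> seq2 A B k o -> False).
  { intros [|[|j]] [|[|k]] o hjk; simpl; try tauto; try lia; eauto. }
  specialize (H H1 H2).
  rewrite (Pr_ext (fun o => exists k, seq2 A B k o) (fun o => A o \/ B o)) in H.
  2:{ intro o; split. intros [[|[|k]] h]; simpl in h; tauto.
      intros [h|h]; [exists 0%nat| exists 1%nat]; exact h. }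
  apply (uniqueness_sum (fun k => Pr (seq2 A B k))). apply H.
  intros eps he. exists 1%nat. intros n hn. unfold R_dist.
  assert (sum_f_R0 (fun k => Pr (seq2 A B k)) n = Pr A + Pr B).
  { induction n. lia. destruct n. simpl. ring.
    rewrite tech5, IHn by lia. simpl. rewrite Pr_empty. ring. }
  rewrite H0. rewrite Rminus_diag, Rabs_R0; auto.
Qed.

Lemma Pr_split A B : ev A -> ev B -> Pr A = Pr (fun o => A o /\ B o) + Pr (fun o => A o /\ ~ B o).
Proof.
  intros hA hB. rewrite <- Pr_add2.
  apply Pr_ext; intro o; tauto.
  apply ev_and; auto. apply ev_and; auto using ev_not. intros o; tauto.
Qed.

Lemma Pr_mono A B : ev A -> ev B -> (forall o, A o -> B o) -> Pr A <= Pr B.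
Proof.
  intros hA hB h. rewrite (Pr_split B A hB hA).
  rewrite (Pr_ext (fun o => B o /\ A o) A) by (intro o; split; tauto || (intro; split; auto; tauto)).
  assert (0 <= Pr (fun o => B o /\ ~ A o)). apply Pr_nonneg, ev_and; auto using ev_not. lra.
Qed.

Lemma Pr_compl A : ev A -> Pr (fun o => ~ A o) = 1 - Pr A.
Proof.
  intros hA. rewrite <- (Pr_full P). rewrite (Pr_split (fun _ => True) A (event_full P) hA).
  rewrite (Pr_ext (fun o => True /\ A o) A) by (intro; tauto).
  rewrite (Pr_ext (fun o => True /\ ~ A o) (fun o => ~ A o)) by (intro; tauto). ring.
Qed.

End Prob.

Lemma inf_sum_le (a : nat -> R) l c : infinite_sum a l -> (forall M, sum_f_R0 a M <= c) -> l <= c.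
Proof.
  intros H hc. apply Rnot_lt_le. intro hl.
  destruct (H (l - c)) as [N HN]. lra.
  specialize (HN N (le_n _)). specialize (hc N). unfold R_dist in HN.
  rewrite Rabs_minus_sym, Rabs_right in HN by lra. lra.
Qed.

Section BC.
Variable P : prob_space.
Notation ev := (event P).
Notation Pr := (Pr P).

Lemma ev_fin_forall (B : nat -> Omega P -> Prop) (hB : forall k, ev (B k)) (j : nat) :
  ev (fun o => forall i, (i < j)%nat -> ~ B i o).
Proof.
  induction j.
  - apply (ev_ext P (fun _ => True)). intro o; split; auto; intros; lia. apply event_full.
  - apply (ev_ext P (fun o => (forall i, (i < j)%nat -> ~ B i o) /\ ~ B j o)).
    intro o; split. intros [h1 h2] i hi. destruct (Nat.eq_dec i j). subst; auto. apply h1; lia.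
    intros h; split; auto.
    apply ev_and; auto. apply ev_not; auto.
Qed.

Lemma Pr_union_le (B : nat -> Omega P -> Prop) (hB : forall k, ev (B k)) c :
  (forall M, sum_f_R0 (fun j => Pr (B j)) M <= c) ->
  Pr (fun o => exists j, B j o) <= c.
Proof.
  intros hc.
  set (D := fun j o => B j o /\ forall i, (i < j)%nat -> ~ B i o).
  assert (hD : forall j, ev (D j)) by (intro j; apply ev_and; auto; apply ev_fin_forall; auto).
  assert (Hs := Pr_sigma_add P D hD).
  assert (Hd : forall j k o, j <> k -> D j o -> D k o -> False).
  { intros j k o hjk [h1 h2] [h3 h4]. destruct (Nat.lt_total j k) as [h|[h|h]]. exact (h4 j h h1). exact (hjk h). exact (h2 k h h3). }
  specialize (Hs Hd).
  rewrite (Pr_ext P (fun o => exists k, D k o) (fun o => exists j, B j o)) in Hs.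
  - apply (inf_sum_le _ _ _ Hs). intro M. eapply Rle_trans; [|apply (hc M)].
    apply sum_Rle. intros n _. apply Pr_mono; auto. intros o [h _]; auto.
  - intro o; split. intros [k [h _]]; eauto.
    intros [j hj]. revert hj. induction j as [j IH] using (well_founded_induction lt_wf).
    intro hj. destruct (classic (forall i, (i < j)%nat -> ~ B i o)) as [h|h].
    exists j; split; auto.
    apply not_all_ex_not in h. destruct h as [i hi].
    apply imply_to_and in hi. destruct hi as [hi1 hi2]. apply NNPP in hi2. eauto.
Qed.

Lemma borel_cantelli (B : nat -> Omega P -> Prop) (hB : forall k, ev (B k)) (tau : nat -> R) :
  (forall N M, sum_f_R0 (fun j => Pr (B (N + j)%nat)) M <= tau N) ->
  (forall eta, 0 < eta -> exists N, tau N < eta) ->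
  almost_surely P (fun o => exists K, forall k, (K <= k)%nat -> ~ B k o).
Proof.
  intros hs ht.
  set (E := fun o => exists K, forall k, (K <= k)%nat -> ~ B k o).
  assert (hE : ev E).
  { apply (ev_ext P (fun o => exists K, ~ (exists j, B (K + j)%nat o))).
    intro o; split. intros [K hK]; exists K; intros k hk h. apply hK. exists (k - K)%nat.
    replace (K + (k - K))%nat with k by lia; auto.
    intros [K hK]; exists K; intros [j hj]. apply (hK (K + j)%nat); auto; lia.
    apply event_cunion. intro K. apply ev_not. apply event_cunion. intro j; auto. }
  exists E. split; auto. split; [|auto].
  assert (h0 : Pr (fun o => ~ E o) <= 0).
  { apply Rnot_lt_le. intro hp. destruct (ht _ hp) as [N hN].
    assert (Pr (fun o => ~ E o) <= Pr (fun o => exists j, B (N + j)%nat o)).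
    { apply Pr_mono. apply ev_not; auto. apply event_cunion; auto.
      intros o ho. apply NNPP. intro hn. apply ho. exists N. intros k hk hb. apply hn.
      exists (k - N)%nat. replace (N + (k - N))%nat with k by lia; auto. }
    assert (Pr (fun o => exists j, B (N + j)%nat o) <= tau N).
    { apply Pr_union_le; auto. }
    lra. }
  rewrite Pr_compl in h0 by auto.
  assert (Pr E <= 1).
  { rewrite <- (Pr_full P). apply Pr_mono; auto using event_full. }
  lra.
Qed.
End BC.

Lemma ev_Forall P {X} (Q : X -> Omega P -> Prop) (l : list X) :
  (forall x, In x l -> event P (Q x)) -> event P (fun o => Forall (fun x => Q x o) l).
Proof.
  induction l as [|a l IH]; intros h.
  - apply (ev_ext P (fun _ => True)). intro; split; auto. apply event_full.
  - apply (ev_ext P (fun o => Q a o /\ Forall (fun x => Q x o) l)).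
    intro o; split. intros [h1 h2]; constructor; auto. intro h'; inversion h'; auto.
    apply ev_and. apply h; left; auto. apply IH; intros; apply h; right; auto.
Qed.

Lemma fold_const (l : list (pt * nat)) (c : R) :
  fold_right Rmult 1 (map (fun _ => c) l) = c ^ length l.
Proof. induction l; simpl; auto. rewrite IHl; ring. Qed.

Section Indep.
Variable d : nat.
Variable P : prob_space.
Variable W : pt -> nat -> Omega P -> R.
Variable F : R -> R.
Hypothesis HI : iid_conductances d P W F.
Variable t : R.
Variable ell : nat.

Definition goodG (G : list (pt * nat)) (o : Omega P) : Prop :=
  Forall (fun e => W (fst e) (snd e) o <= t) G.

Lemma ev_goodG G : (forall e, In e G -> is_edge d e) -> event P (goodG G).
Proof.
  intro h. unfold goodG. apply ev_Forall. intros [x i] hx. destruct HI as [_ [h2 _]].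
  apply h2. apply h; auto.
Qed.

Lemma Forall_concat {X} (Q : X -> Prop) (Ls : list (list X)) :
  Forall Q (concat Ls) <-> Forall (fun G => Forall Q G) Ls.
Proof.
  induction Ls; simpl. split; auto.
  rewrite Forall_app, IHLs. split. intros [h1 h2]; constructor; auto.
  intro h; inversion h; auto.
Qed.

Lemma indep_gen : forall (L T : list (list (pt * nat))),
  NoDup (concat (T ++ L)) -> (forall e, In e (concat (T ++ L)) -> is_edge d e) ->
  Forall (fun G => length G = ell) (T ++ L) ->
  Pr P (fun o => Forall (fun G => goodG G o) T /\ Forall (fun G => ~ goodG G o) L)
  = (F t ^ ell) ^ length T * (1 - F t ^ ell) ^ length L.
Proof.
  induction L as [|G L IH]; intros T hnd hed hl.
  - rewrite app_nil_r in *. simpl.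
    rewrite (Pr_ext P _ (fun o => Forall (fun e => W (fst e) (snd e) o <= (fun _ => t) e) (concat T))).
    2:{ intro o. unfold goodG. rewrite Forall_concat. split. tauto. intro; split; auto. }
    destruct HI as [_ [_ h3]]. rewrite h3; auto.
    2:{ apply Forall_forall; auto. }
    rewrite fold_const. rewrite Rmult_1_r, <- pow_mult. f_equal.
    clear - hl. induction T; simpl; auto. inversion hl; subst. rewrite length_app, IHT; auto. simpl; lia.
  - assert (hperm : Permutation (concat (T ++ G :: L)) (concat ((G :: T) ++ L))).
    { rewrite !concat_app. simpl. rewrite app_assoc. apply Permutation_app_tail. apply Permutation_app_comm. }
    assert (hnd' : NoDup (concat ((G :: T) ++ L))) by (eapply Permutation_NoDup; eauto).
    assert (hed' : forall e, In e (concat ((G :: T) ++ L)) -> is_edge d e).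
    { intros e he. apply hed. eapply Permutation_in; [symmetry|]; eauto. }
    assert (hl' : Forall (fun G => length G = ell) ((G :: T) ++ L)).
    { rewrite Forall_app in *. destruct hl as [h1 h2]. inversion h2; subst. split; auto. }
    assert (hnd'' : NoDup (concat (T ++ L))).
    { simpl in hnd'. apply NoDup_app_remove_l in hnd'. auto. }
    assert (hed'' : forall e, In e (concat (T ++ L)) -> is_edge d e).
    { intros e he. apply hed'. simpl. apply in_or_app; right; auto. }
    assert (hl'' : Forall (fun G => length G = ell) (T ++ L)) by (inversion hl'; auto).
    assert (IH1 := IH (G :: T) hnd' hed' hl'). assert (IH2 := IH T hnd'' hed'' hl'').
    assert (hevA : event P (fun o => Forall (fun G => goodG G o) T /\ Forall (fun G => ~ goodG G o) L)).
    { apply ev_and; apply ev_Forall; intros G' hG'; try apply ev_not; apply ev_goodG; intros e he; apply hed'';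
      rewrite concat_app; apply in_or_app; [left|right]; apply in_concat; eauto. }
    assert (hevG : event P (goodG G)).
    { apply ev_goodG. intros e he. apply hed'. simpl. apply in_or_app; auto. }
    rewrite (Pr_split P _ _ hevA hevG) in IH2.
    rewrite (Pr_ext P (fun o => (Forall (fun G => goodG G o) T /\ Forall (fun G => ~ goodG G o) L) /\ goodG G o)
                      (fun o => Forall (fun G => goodG G o) (G :: T) /\ Forall (fun G => ~ goodG G o) L)) in IH2.
    2:{ intro o. split. intros [[h1 h2] h3]. split; auto. intros [h1 h2]. inversion h1; subst. auto. }
    rewrite IH1 in IH2.
    rewrite (Pr_ext P _ (fun o => (Forall (fun G => goodG G o) T /\ Forall (fun G => ~ goodG G o) L) /\ ~ goodG G o)).
    2:{ intro o. split. intros [h1 h2]. inversion h2; subst. auto. intros [[h1 h2] h3]. split; auto. }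
    simpl length in *. simpl pow in *. lra.
Qed.

Lemma indep_bad (L : list (list (pt * nat))) :
  NoDup (concat L) -> (forall e, In e (concat L) -> is_edge d e) ->
  Forall (fun G => length G = ell) L ->
  Pr P (fun o => Forall (fun G => ~ goodG G o) L) = (1 - F t ^ ell) ^ length L.
Proof.
  intros h1 h2 h3. assert (H := indep_gen L [] h1 h2 h3). simpl in H.
  rewrite Rmult_1_l in H. rewrite <- H. apply Pr_ext. intro o; split; auto. intros [_ h]; auto.
Qed.
End Indep.

Lemma in_zrange_aux a m k : In k (zrange_aux a m) <-> (a <= k < a + Z.of_nat m)%Z.
Proof.
  revert a; induction m; intro a; simpl. lia.
  rewrite IHm. lia.
Qed.

Lemma nodup_zrange_aux a m : NoDup (zrange_aux a m).
Proof.
  revert a; induction m; intro a; simpl; constructor; auto.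
  rewrite in_zrange_aux; lia.
Qed.

Lemma length_zrange_aux a m : length (zrange_aux a m) = m.
Proof. revert a; induction m; intro a; simpl; auto. Qed.

Lemma in_zrange n k : In k (zrange n) <-> (- Z.of_nat n <= k <= Z.of_nat n)%Z.
Proof. unfold zrange. rewrite in_zrange_aux. lia. Qed.

Lemma NoDup_flat_map' {A B} (f : A -> list B) (l : list A) :
  NoDup l -> (forall x, In x l -> NoDup (f x)) ->
  (forall x y a, In x l -> In y l -> x <> y -> In a (f x) -> In a (f y) -> False) ->
  NoDup (flat_map f l).
Proof.
  induction l as [|x l IH]; intros h1 h2 h3; simpl. constructor.
  inversion h1; subst. apply NoDup_app. apply h2; left; auto.
  apply IH; auto. intros; apply h2; right; auto.
  intros x0 y0 b hx0 hy0 hne hb1 hb2. apply (h3 x0 y0 b); auto; right; auto.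
  intros a ha ha'. apply in_flat_map in ha'. destruct ha' as [y [hy ha']].
  apply (h3 x y a); auto. left; auto. right; auto. intro; subst; auto.
Qed.

Lemma in_box_iff d n x : In x (box d n) <-> in_box d n x.
Proof.
  unfold in_box. revert x; induction d; intro x; simpl.
  - split. intros [h|[]]; subst; auto. intros [h _]; destruct x; simpl in h; try lia; auto.
  - rewrite in_flat_map. split.
    + intros [k [hk hx]]. apply in_map_iff in hx. destruct hx as [y [<- hy]].
      apply IHd in hy. destruct hy as [h1 h2]. simpl; split; auto. constructor; auto. apply in_zrange; auto.
    + intros [h1 h2]. destruct x as [|k y]; simpl in h1; try lia. inversion h2; subst.
      exists k; split. apply in_zrange; auto. apply in_map. apply IHd; split; auto.
Qed.

Lemma nodup_box d n : NoDup (box d n).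
Proof.
  induction d; simpl. repeat constructor; auto.
  apply NoDup_flat_map'. apply nodup_zrange_aux.
  intros k _. apply FinFun.Injective_map_NoDup; auto. intros a b h; inversion h; auto.
  intros k k' a _ _ hk h1 h2. apply in_map_iff in h1, h2.
  destruct h1 as [y [<- _]]. destruct h2 as [y' [h _]]. inversion h; auto.
Qed.

Lemma length_box d n : length (box d n) = Nat.pow (2 * n + 1) d.
Proof.
  induction d; [simpl; auto|]. simpl box. rewrite (flat_map_constant_length (c := Nat.pow (2 * n + 1) d)).
  unfold zrange. rewrite length_zrange_aux. rewrite Nat.pow_succ_r'. lia.
  intros; rewrite length_map; auto.
Qed.

Fixpoint decr (x : pt) (i : nat) : pt :=
  match x, i with
  | [], _ => []
  | k :: x', O => (k - 1)%Z :: x'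
  | k :: x', S i' => k :: decr x' i'
  end.

Lemma incr_decr x i : incr (decr x i) i = x.
Proof. revert i; induction x; intros [|i]; simpl; auto; try rewrite IHx; f_equal; lia. Qed.

Lemma decr_incr x i : decr (incr x i) i = x.
Proof. revert i; induction x; intros [|i]; simpl; auto; try rewrite IHx; f_equal; lia. Qed.

Lemma length_decr x i : length (decr x i) = length x.
Proof. revert i; induction x; intros [|i]; simpl; auto. Qed.

Lemma length_incr x i : length (incr x i) = length x.
Proof. revert i; induction x; intros [|i]; simpl; auto. Qed.

Definition zsum (x : pt) : Z := fold_right Z.add 0%Z x.

Lemma zsum_decr x i : (i < length x)%nat -> zsum (decr x i) = (zsum x - 1)%Z.
Proof. revert i; induction x; intros [|i] h; simpl in *; try lia. rewrite IHx; lia. Qed.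

Definition star (d : nat) (x : pt) : list (pt * nat) :=
  flat_map (fun i => [(x, i); (decr x i, i)]) (seq 0 d).

Lemma length_star d x : length (star d x) = (2 * d)%nat.
Proof. unfold star. rewrite (flat_map_constant_length (c := 2%nat)). rewrite length_seq; lia. auto. Qed.

Lemma in_star d x e : In e (star d x) <-> exists i, (i < d)%nat /\ (e = (x, i) \/ e = (decr x i, i)).
Proof.
  unfold star. rewrite in_flat_map. split.
  intros [i [hi he]]. apply in_seq in hi. exists i; split; [lia|]. simpl in he; intuition.
  intros [i [hi he]]. exists i; split. apply in_seq; lia. simpl; intuition.
Qed.

Definition even_site (d : nat) (x : pt) : Prop := length x = d /\ Z.even (zsum x) = true.

Lemma decr_neq x i : (i < length x)%nat -> decr x i <> x.
Proof. intros h e. assert (h' := zsum_decr x i h). rewrite e in h'. lia. Qed.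

Lemma decr_inj x y i : decr x i = decr y i -> x = y.
Proof. intro h. rewrite <- (incr_decr x i), <- (incr_decr y i), h; auto. Qed.

Lemma even_odd_contra x y : Z.even (zsum x) = true -> Z.even (zsum y) = true -> 
  zsum x = (zsum y - 1)%Z -> False.
Proof.
  intros h1 h2 h3. rewrite h3 in h1.
  replace (zsum y - 1)%Z with ((zsum y - 2) + 1)%Z in h1 by lia.
  rewrite Z.even_add in h1. replace (zsum y - 2)%Z with (zsum y + 2 * (-1))%Z in h1 by lia.
  rewrite Z.even_add_mul_2, h2 in h1. simpl in h1. discriminate.
Qed.

Lemma stars_nodup d (S : list pt) :
  NoDup S -> (forall x, In x S -> even_site d x) -> NoDup (flat_map (star d) S).
Proof.
  intros h1 h2. apply NoDup_flat_map'; auto.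
  - intros x hx. destruct (h2 x hx) as [hl _]. unfold star. apply NoDup_flat_map'.
    apply seq_NoDup.
    intros i hi. apply in_seq in hi. constructor. intros [h|[]]. inversion h.
    apply (decr_neq x i); auto; lia. repeat constructor; auto.
    intros i j e _ _ hij ha hb. simpl in ha, hb. destruct ha as [<-|[<-|[]]]; destruct hb as [h|[h|[]]]; inversion h; auto.
  - intros x y e hx hy hxy ha hb. apply in_star in ha, hb.
    destruct (h2 x hx) as [lx ex]. destruct (h2 y hy) as [ly ey].
    destruct ha as [i [hi [->| ->]]]; destruct hb as [j [hj hb]]; destruct hb as [hb|hb];
      injection hb as e1 e2.
    + auto.
    + apply (even_odd_contra x y); auto. rewrite e1. apply zsum_decr; lia.
    + apply (even_odd_contra y x); auto. rewrite <- e1. subst j. apply zsum_decr; lia.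
    + apply hxy. subst j. eapply decr_inj; eauto.
Qed.

Definition cb_sites (d' m : nat) : list pt :=
  flat_map (fun y => map (fun z => z :: y) (filter (fun z => Z.even (z + zsum y)) (zrange m))) (box d' m).

Lemma cb_in d' m x : In x (cb_sites d' m) -> In x (box (S d') m) /\ even_site (S d') x.
Proof.
  unfold cb_sites. rewrite in_flat_map. intros [y [hy hx]]. apply in_map_iff in hx.
  destruct hx as [z [<- hz]]. apply filter_In in hz. destruct hz as [hz1 hz2].
  apply in_box_iff in hy. destruct hy as [hy1 hy2]. split.
  apply in_box_iff. split. simpl; auto. constructor; auto. apply in_zrange; auto.
  split. simpl; auto. simpl. auto.
Qed.

Lemma cb_nodup d' m : NoDup (cb_sites d' m).
Proof.
  unfold cb_sites. apply NoDup_flat_map'. apply nodup_box.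
  intros y _. apply FinFun.Injective_map_NoDup. intros a b h; inversion h; auto.
  apply NoDup_filter. apply nodup_zrange_aux.
  intros y y' x _ _ hyy h1 h2. apply in_map_iff in h1, h2. destruct h1 as [z [<- _]].
  destruct h2 as [z' [h _]]. inversion h; auto.
Qed.

Lemma filter_par_len a k r : (k <= length (filter (fun z => Z.even (z + r)) (zrange_aux a (2 * k))))%nat.
Proof.
  revert a; induction k; intro a; [simpl; lia|].
  replace (2 * S k)%nat with (S (S (2 * k))) by lia. simpl.
  specialize (IHk (a + 1 + 1)%Z).
  assert (Z.even (a + 1 + r) = negb (Z.even (a + r))).
  { replace (a + 1 + r)%Z with ((a + r) + 1)%Z by lia. rewrite Z.even_add; destruct (Z.even (a+r)); auto. }
  rewrite H. destruct (Z.even (a + r)); simpl; replace (k + (k + 0))%nat with (2 * k)%nat by lia; lia.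
Qed.

Lemma cb_len d' m : (Nat.pow (2 * m + 1) d' * m <= length (cb_sites d' m))%nat.
Proof.
  unfold cb_sites. rewrite <- length_box. generalize (box d' m). intro l.
  induction l as [|y l IH]; simpl; [lia|]. rewrite length_app, length_map.
  apply Nat.add_le_mono; auto.
  unfold zrange. replace (2 * m + 1)%nat with (S (2 * m)) by lia. simpl.
  pose proof (filter_par_len (- Z.of_nat m + 1) m (zsum y)).
  replace (2 * m)%nat with (m + (m + 0))%nat in H by lia.
  destruct (Z.even (- Z.of_nat m + zsum y)); simpl; lia.
Qed.

Lemma sumR_cons {A} (g : A -> R) a l : sumR g (a :: l) = g a + sumR g l.
Proof. reflexivity. Qed.

Lemma sumR_nil {A} (g : A -> R) : sumR g [] = 0.
Proof. reflexivity. Qed.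

Lemma sumR_le {A} (g h : A -> R) l : (forall a, In a l -> g a <= h a) -> sumR g l <= sumR h l.
Proof.
  induction l; intro H; rewrite ?sumR_nil, ?sumR_cons. lra.
  assert (g a <= h a) by (apply H; left; auto). assert (sumR g l <= sumR h l) by (apply IHl; intros; apply H; right; auto). lra.
Qed.

Lemma sumR_plus {A} (g h : A -> R) l : sumR (fun a => g a + h a) l = sumR g l + sumR h l.
Proof. induction l; rewrite ?sumR_nil, ?sumR_cons. ring. rewrite IHl; ring. Qed.

Lemma sumR_scal {A} (g : A -> R) c l : sumR (fun a => c * g a) l = c * sumR g l.
Proof. induction l; rewrite ?sumR_nil, ?sumR_cons. ring. rewrite IHl; ring. Qed.

Lemma sumR_zero {A} (l : list A) : sumR (fun _ => 0) l = 0.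
Proof. induction l; rewrite ?sumR_nil, ?sumR_cons; auto. rewrite IHl; ring. Qed.

Lemma sumR_swap {A B} (g : A -> B -> R) l1 l2 :
  sumR (fun a => sumR (g a) l2) l1 = sumR (fun b => sumR (fun a => g a b) l1) l2.
Proof.
  induction l1; rewrite ?sumR_nil, ?sumR_cons. rewrite sumR_zero; auto.
  rewrite IHl1. rewrite <- sumR_plus. f_equal.
Qed.

Definition ptdec := list_eq_dec Z.eq_dec.

Lemma sumR_delta (l : list pt) x (g : pt -> R) : NoDup l ->
  sumR (fun y => if ptdec y x then g y else 0) l = if in_dec ptdec x l then g x else 0.
Proof.
  induction l as [|a l IH]; intro hnd; rewrite ?sumR_nil, ?sumR_cons. simpl; auto.
  inversion hnd; subst. rewrite IH by auto.
  destruct (ptdec a x) as [<-|h].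
  - destruct (in_dec ptdec a (a :: l)) as [h1|h1]; destruct (in_dec ptdec a l) as [h2|h2]; try tauto; try ring.
    exfalso; apply h1; left; auto.
  - destruct (in_dec ptdec x (a :: l)) as [h1|h1]; destruct (in_dec ptdec x l) as [h2|h2]; try ring.
    simpl in h1; destruct h1; [congruence|tauto]. exfalso; apply h1; right; auto.
Qed.

Lemma sumR_delta_le (l : list pt) x (g : pt -> R) : NoDup l -> 0 <= g x ->
  sumR (fun y => if ptdec y x then g y else 0) l <= g x.
Proof. intros h1 h2. rewrite sumR_delta by auto. destruct in_dec; lra. Qed.

Lemma sumR_seq_le (g : nat -> R) d t : (forall i, (i < d)%nat -> g i <= t) -> sumR g (seq 0 d) <= INR d * t.
Proof.
  intro h. induction d. unfold sumR; simpl; lra.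
  rewrite S_INR. rewrite seq_S. unfold sumR in *. rewrite map_app, fold_right_app. simpl.
  assert (H: forall a l, fold_right Rplus a l = a + fold_right Rplus 0 l).
  { intros a l; induction l; simpl; [ring|rewrite IHl; ring]. }
  rewrite H. assert (g d <= t) by (apply h; lia).
  assert (fold_right Rplus 0 (map g (seq 0 d)) <= INR d * t) by (apply IHd; intros; apply h; lia). lra.
Qed.

Lemma sumR_ext {A} (g h : A -> R) l : (forall a, In a l -> g a = h a) -> sumR g l = sumR h l.
Proof. intro H. apply Rle_antisym; apply sumR_le; intros a ha; rewrite H; auto; lra. Qed.

Lemma incr_eq_iff y x i : incr y i = x <-> y = decr x i.
Proof. split; intro h. rewrite <- h, decr_incr; auto. rewrite h, incr_decr; auto. Qed.

Lemma delta_bound d n (w : pt -> nat -> R) x t :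
  (forall y i, length y = d -> (i < d)%nat -> 0 <= w y i) ->
  In x (box d n) ->
  (forall i, (i < d)%nat -> w x i <= t /\ w (decr x i) i <= t) ->
  lambda1_le d n w (2 * INR d * t).
Proof.
  intros hw hx ht l [hl _].
  set (f := fun y : pt => if ptdec y x then 1 else 0).
  assert (hxl : length x = d) by (apply in_box_iff in hx; apply hx).
  assert (hen : energy d n w f <= 2 * INR d * t).
  { unfold energy.
    eapply Rle_trans. apply (sumR_le _ (fun y => sumR (fun i => (if ptdec y x then w y i else 0) +
                 (if ptdec y (decr x i) then w y i else 0)) (seq 0 d))).
    { intros y hy. apply in_box_iff in hy. destruct hy as [hyl _]. apply sumR_le. intros i hi.
      apply in_seq in hi. assert (0 <= w y i) by (apply hw; auto; lia). unfold f.
      destruct (ptdec (incr y i) x) as [e1|e1]; destruct (ptdec y (decr x i)) as [e2|e2];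
      try (apply incr_eq_iff in e1; tauto); try (rewrite <- incr_eq_iff in e2; tauto);
      destruct (ptdec y x); nra. }
    rewrite (sumR_ext _ (fun y => sumR (fun i => if ptdec y x then w y i else 0) (seq 0 d) +
                sumR (fun i => if ptdec y (decr x i) then w y i else 0) (seq 0 d))).
    2:{ intros; apply sumR_plus. }
    rewrite sumR_plus.
    assert (h1 : sumR (fun y => sumR (fun i => if ptdec y x then w y i else 0) (seq 0 d)) (box d (S n)) <= INR d * t).
    { rewrite (sumR_ext _ (fun y => if ptdec y x then sumR (fun i => w y i) (seq 0 d) else 0)).
      2:{ intros y _. destruct ptdec; auto. apply sumR_zero. }
      eapply Rle_trans. apply (sumR_delta_le _ x (fun y => sumR (fun i => w y i) (seq 0 d))).
      apply nodup_box. rewrite <- (sumR_zero (seq 0 d)). apply sumR_le. intros i hi; apply in_seq in hi; apply hw; auto; lia.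
      apply sumR_seq_le. intros; apply ht; auto. }
    assert (h2 : sumR (fun y => sumR (fun i => if ptdec y (decr x i) then w y i else 0) (seq 0 d)) (box d (S n)) <= INR d * t).
    { rewrite sumR_swap. apply sumR_seq_le. intros i hi.
      eapply Rle_trans. apply (sumR_delta_le _ (decr x i) (fun y => w y i)).
      apply nodup_box. apply hw; auto. rewrite length_decr; auto. apply ht; auto. }
    lra. }
  eapply Rle_trans; [|apply hen]. apply hl. exists f. split; [|split; [|reflexivity]].
  - intros y hy. unfold f. destruct ptdec; auto. subst. exfalso; apply hy, in_box_iff; auto.
  - rewrite (sumR_ext _ (fun y => if ptdec y x then 1 else 0)).
    rewrite sumR_delta by apply nodup_box. destruct in_dec; tauto.
    intros y _; unfold f; destruct ptdec; ring.
Qed.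

Lemma not_Forall_not {A} (Q : A -> Prop) l : ~ Forall (fun x => ~ Q x) l -> exists x, In x l /\ Q x.
Proof.
  intro h. apply NNPP. intro hn. apply h. apply Forall_forall. intros x hx hq. apply hn; eauto.
Qed.

Lemma lambda1_le_mono d n w b b' : lambda1_le d n w b -> b <= b' -> lambda1_le d n w b'.
Proof. intros h hb l hl. specialize (h l hl). lra. Qed.

Lemma box_mono d m n x : (m <= n)%nat -> In x (box d m) -> In x (box d n).
Proof.
  intros h hx. apply in_box_iff in hx. apply in_box_iff. destruct hx as [h1 h2]. split; auto.
  eapply Forall_impl; [|apply h2]. simpl. intros a ha. lia.
Qed.

Lemma scheme (d' : nat) (P : prob_space) (W : pt -> nat -> Omega P -> R) (F : R -> R)
  (HI : iid_conductances (S d') P W F) (t : nat -> R) (m : nat -> nat) (tau : nat -> R) :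
  (forall N M, sum_f_R0 (fun j => (1 - F (t (N + j)%nat) ^ (2 * S d')) ^ length (cb_sites d' (m (N + j)%nat))) M <= tau N) ->
  (forall eta, 0 < eta -> exists N, tau N < eta) ->
  almost_surely P (fun o => exists K, forall k, (K <= k)%nat -> forall n, (m k <= n)%nat ->
     lambda1_le (S d') n (fun x i => W x i o) (2 * INR (S d') * t k)).
Proof.
  intros hs ht.
  set (d := S d').
  set (B := fun k o => Forall (fun G => ~ goodG P W (t k) G o) (map (star d) (cb_sites d' (m k)))).
  assert (hedge : forall k e, In e (concat (map (star d) (cb_sites d' (m k)))) -> is_edge d e).
  { intros k e he. rewrite <- flat_map_concat_map in he. apply in_flat_map in he.
    destruct he as [x [hx he]]. apply cb_in in hx. destruct hx as [_ [hl _]].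
    apply in_star in he. destruct he as [i [hi [-> | ->]]]; split; simpl; auto. rewrite length_decr; auto. }
  assert (hB : forall k, event P (B k)).
  { intro k. apply ev_Forall. intros G hG. apply ev_not. apply ev_goodG with (d := d) (F := F); auto.
    intros e he. apply (hedge k). apply in_concat. eauto. }
  assert (hPr : forall k, Pr P (B k) = (1 - F (t k) ^ (2 * S d')) ^ length (cb_sites d' (m k))).
  { intro k. unfold B. rewrite (indep_bad d P W F HI (t k) (2 * S d')). rewrite length_map; auto.
    rewrite <- flat_map_concat_map. apply stars_nodup. apply cb_nodup. intros x hx; apply cb_in in hx; apply hx.
    apply hedge. apply Forall_forall. intros G hG. apply in_map_iff in hG. destruct hG as [x [<- _]].
    apply length_star. }
  assert (H := borel_cantelli P B hB tau).
  destruct H as [E [hE1 [hE2 hE3]]].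
  - intros N M. eapply Rle_trans; [|apply (hs N M)]. right. apply sum_eq. intros; apply hPr.
  - auto.
  - exists E; split; auto; split; auto. intros o ho. destruct (hE3 o ho) as [K hK]. exists K.
    intros k hk n hn. specialize (hK k hk). unfold B in hK. apply not_Forall_not in hK.
    destruct hK as [G [hG hg]]. apply in_map_iff in hG. destruct hG as [x [<- hx]].
    apply cb_in in hx. destruct hx as [hxb [hxl _]].
    apply delta_bound with (x := x).
    + intros y i hy hi. destruct HI as [hpos _]. left. apply hpos. split; auto.
    + eapply box_mono; eauto.
    + intros i hi. unfold goodG in hg. rewrite Forall_forall in hg. split.
      apply (hg (x, i)). apply in_star. eauto.
      apply (hg (decr x i, i)). apply in_star. eauto.
Qed.

Lemma exp_le x y : x <= y -> exp x <= exp y.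
Proof. intro h; destruct (Req_dec x y) as [->|h']; [lra|left; apply exp_increasing; lra]. Qed.

Lemma exp_le_inv x y : exp x <= exp y -> x <= y.
Proof. intro h. apply Rnot_lt_le. intro h'. apply exp_increasing in h'. lra. Qed.

Lemma ln_le' x y : 0 < x -> x <= y -> ln x <= ln y.
Proof. intros h1 h2; destruct (Req_dec x y) as [->|h']; [lra|left; apply ln_increasing; lra]. Qed.

Lemma ln_le_sub1 y : 0 < y -> ln y <= y - 1.
Proof. intro h. pose proof (exp_ineq1_le (ln y)). rewrite exp_ln in H by auto. lra. Qed.

Lemma nat_large (A : R) : exists N, forall n, (N <= n)%nat -> A < INR n.
Proof.
  destruct (INR_archimed 1 A) as [N hN]; [lra|]. exists N. intros n hn.
  apply le_INR in hn. lra.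
Qed.

Lemma INR_le_pow2 n : INR n <= 2 ^ n.
Proof.
  induction n. simpl; lra. rewrite S_INR. simpl.
  assert (1 <= 2 ^ n) by (apply pow_R1_Rle; lra). lra.
Qed.

Lemma exp_ge_quad y : 0 <= y -> 1 + y + y * y / 4 <= exp y.
Proof.
  intro h. replace y with (y/2 + y/2) at 4 by field. rewrite exp_plus.
  pose proof (exp_ineq1_le (y/2)). nra.
Qed.

Lemma tele_step (r x : R) : 0 < r -> 1 <= x ->
  exp (- (r + 1) * ln (x + 1)) <= exp (- r * ln x) / r - exp (- r * ln (x + 1)) / r.
Proof.
  intros hr hx.
  assert (hu : 1 / (x + 1) <= ln (x + 1) - ln x).
  { pose proof (ln_le_sub1 (x / (x + 1)) ltac:(apply Rdiv_lt_0_compat; lra)).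
    unfold Rdiv in H. rewrite ln_mult, ln_Rinv in H by (try apply Rinv_0_lt_compat; lra).
    assert (x * / (x + 1) - 1 = - (1 / (x + 1))) by (field; lra). lra. }
  replace (- r * ln x) with (- r * ln (x + 1) + r * (ln (x + 1) - ln x)) by ring.
  rewrite exp_plus.
  pose proof (exp_ineq1_le (r * (ln (x + 1) - ln x))).
  replace (- (r + 1) * ln (x + 1)) with (- r * ln (x + 1) + - ln (x + 1)) by ring.
  rewrite exp_plus, exp_Ropp, exp_ln by lra.
  assert (0 < exp (- r * ln (x + 1))) by apply exp_pos.
  set (E := exp (- r * ln (x + 1))) in *.
  apply (Rmult_le_reg_l r); auto.
  replace (r * (E * exp (r * (ln (x + 1) - ln x)) / r - E / r)) with (E * (exp (r * (ln (x + 1) - ln x)) - 1)) by (field; lra).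
  replace (r * (E * / (x + 1))) with (E * (r * (1 / (x + 1)))) by (field; lra).
  apply Rmult_le_compat_l; [lra|]. nra.
Qed.

Lemma tele_tau (r : R) (a : nat -> R) (N0 : nat) : 0 < r -> (1 <= N0)%nat ->
  (forall k, (N0 <= k)%nat -> a k <= exp (- (r + 1) * ln (INR k + 1))) ->
  (forall N M, sum_f_R0 (fun j => a (N0 + (N + j))%nat) M <= exp (- r * ln (INR (N0 + N))) / r) /\
  (forall eta, 0 < eta -> exists N, exp (- r * ln (INR (N0 + N))) / r < eta).
Proof.
  intros hr hN0 ha. split.
  - intros N M.
    assert (H : forall M, sum_f_R0 (fun j => a (N0 + (N + j))%nat) M <=
              exp (- r * ln (INR (N0 + N))) / r - exp (- r * ln (INR (N0 + N + S M))) / r).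
    { induction M0.
      - simpl. replace (N0 + (N + 0))%nat with (N0 + N)%nat by lia.
        eapply Rle_trans. apply ha; lia. rewrite Nat.add_1_r, S_INR. apply tele_step; auto.
        apply (le_INR 1); lia.
      - rewrite tech5. eapply Rle_trans. apply Rplus_le_compat_r. apply IHM0.
        eapply Rle_trans. apply Rplus_le_compat_l. apply ha. lia.
        replace (N0 + N + S (S M0))%nat with (S (N0 + N + S M0)) by lia. rewrite (S_INR (N0 + N + S M0)).
        replace (N0 + (N + S M0))%nat with (N0 + N + S M0)%nat by lia.
        pose proof (tele_step r (INR (N0 + N + S M0)) hr ltac:(apply (le_INR 1); lia)). lra. }
    eapply Rle_trans. apply H. assert (0 <= exp (- r * ln (INR (N0 + N + S M))) / r).
    { apply Rlt_le, Rdiv_lt_0_compat; auto. apply exp_pos. } lra.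
  - intros eta he.
    destruct (nat_large (exp (- ln (r * eta) / r))) as [N hN]. exists N.
    specialize (hN (N0 + N)%nat ltac:(lia)).
    apply (Rmult_lt_reg_l r); auto. replace (r * (exp (- r * ln (INR (N0 + N))) / r)) with (exp (- r * ln (INR (N0 + N)))) by (field; lra).
    rewrite <- (exp_ln (r * eta)) by nra. apply exp_increasing.
    apply ln_increasing in hN. rewrite ln_exp in hN.
    apply (Rmult_lt_compat_l r) in hN; auto.
    replace (r * (- ln (r * eta) / r)) with (- ln (r * eta)) in hN by (field; lra). lra.
    apply exp_pos.
Qed.

Lemma F_props d' P W F : iid_conductances (S d') P W F ->
  (forall u, 0 <= F u <= 1) /\ (forall u v, u <= v -> F u <= F v).
Proof.
  intros HI. set (e0 := (repeat 0%Z (S d'), 0%nat)).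
  assert (he : is_edge (S d') e0) by (split; [apply repeat_length|simpl; lia]).
  destruct HI as [h1 [h2 h3]].
  assert (HF : forall u, F u = Pr P (fun o => W (fst e0) (snd e0) o <= u)).
  { intro u. specialize (h3 [e0] (fun _ => u) ltac:(repeat constructor; auto) ltac:(constructor; [exact he|constructor])).
    simpl in h3. rewrite Rmult_1_r in h3. rewrite <- h3. apply Pr_ext. intro o; split.
    intro h; inversion h; auto. intro h. constructor; [exact h|constructor]. }
  split.
  - intro u. rewrite HF. split. apply Pr_nonneg; auto. rewrite <- (Pr_full P). apply Pr_mono; auto using event_full.
  - intros u v huv. rewrite !HF. apply Pr_mono; auto. intros o ho; lra.
Qed.

Lemma potter F gamma eta : 0 < gamma -> 0 < eta ->
  (forall u, 0 <= F u) -> (forall u v, u <= v -> F u <= F v) ->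
  regularly_varying_at_0 F gamma ->
  exists c u0, 0 < c /\ 0 < u0 /\ forall u, 0 < u <= u0 -> c * exp ((gamma + eta) * ln u) <= F u.
Proof.
  intros hg he hnn hmono [L [hL hreg]].
  set (q := exp (- eta * ln 2)).
  assert (hq : 0 < q < 1).
  { split. apply exp_pos. unfold q. rewrite <- exp_0. apply exp_increasing.
    pose proof ln_lt_2. nra. }
  destruct (hreg (/ 2) ltac:(lra) (1 - q) ltac:(lra)) as [dl1 [hdl1 H1]].
  destruct (hreg 1 ltac:(lra) (/ 2) ltac:(lra)) as [dl2 [hdl2 H2]].
  set (u1 := Rmin dl1 dl2 / 4).
  assert (hu1 : 0 < u1) by (unfold u1; apply Rmin_case; lra).
  assert (hu1a : u1 < dl1) by (unfold u1; pose proof (Rmin_l dl1 dl2); lra).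
  assert (hu1b : 2 * u1 < dl1) by (unfold u1; pose proof (Rmin_l dl1 dl2); lra).
  assert (hu1c : u1 < dl2) by (unfold u1; pose proof (Rmin_r dl1 dl2); lra).
  assert (hRp : forall u, 0 < u -> Rpower u gamma = exp (gamma * ln u)) by (intros; reflexivity).
  assert (hLpos : forall u, 0 < u <= u1 -> 0 < L u).
  { intros u hu. assert (h0 : 0 <= L u).
    { pose proof (hnn u). rewrite hL in H by lra. rewrite hRp in H by lra.
      pose proof (exp_pos (gamma * ln u)). nra. }
    destruct h0 as [h0|h0]; auto. exfalso.
    specialize (H2 u ltac:(lra)). rewrite Rmult_1_l, <- h0 in H2.
    unfold Rdiv in H2. rewrite Rmult_0_l in H2. rewrite Rminus_0_l, Rabs_Ropp, Rabs_R1 in H2. lra. }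
  assert (hstep : forall u, 0 < u -> 2 * u <= u1 -> q * L (2 * u) <= L u).
  { intros u hu h2u. specialize (H1 (2 * u) ltac:(lra)).
    replace (/ 2 * (2 * u)) with u in H1 by field.
    assert (0 < L (2 * u)) by (apply hLpos; lra).
    apply Rabs_def2 in H1. destruct H1 as [_ H1].
    assert (hh : 1 - (1 - q) < L u / L (2 * u)) by lra.
    apply (Rmult_lt_compat_r (L (2 * u))) in hh; auto.
    unfold Rdiv in hh. rewrite Rmult_assoc, Rinv_l, Rmult_1_r in hh by lra. lra. }
  set (c0 := F (u1 / 2) / exp (gamma * ln u1)).
  assert (hc0 : 0 < c0).
  { unfold c0. apply Rdiv_lt_0_compat; [|apply exp_pos]. rewrite hL by lra. rewrite hRp by lra.
    apply Rmult_lt_0_compat. apply exp_pos. apply hLpos; lra. }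
  assert (hbase : forall u, u1 / 2 <= u <= u1 -> c0 <= L u).
  { intros u hu. unfold c0. assert (hFu : F u = exp (gamma * ln u) * L u) by (rewrite hL by lra; auto).
    assert (F (u1/2) <= F u) by (apply hmono; lra).
    assert (exp (gamma * ln u) <= exp (gamma * ln u1)).
    { apply exp_le. apply Rmult_le_compat_l; [lra|]. apply ln_le'; lra. }
    pose proof (exp_pos (gamma * ln u)). pose proof (exp_pos (gamma * ln u1)).
    assert (0 < L u) by (apply hLpos; lra).
    apply (Rmult_le_reg_r (exp (gamma * ln u1))); auto. unfold Rdiv. rewrite Rmult_assoc, Rinv_l, Rmult_1_r by lra.
    nra. }
  assert (hind : forall k u, u1 / 2 ^ (S k) <= u <= u1 -> c0 * exp (eta * (ln u - ln u1)) <= L u).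
  { induction k; intros u hu.
    - simpl in hu. replace (u1 / (2 * 1)) with (u1 / 2) in hu by field.
      eapply Rle_trans; [|apply hbase; auto]. rewrite <- (Rmult_1_r c0) at 2. apply Rmult_le_compat_l; [lra|].
      rewrite <- exp_0. apply exp_le. assert (ln u <= ln u1) by (apply ln_le'; lra). nra.
    - assert (hpk : 0 < 2 ^ S k) by (apply pow_lt; lra).
      assert (0 < u1 / 2 ^ S (S k)) by (apply Rdiv_lt_0_compat; auto; apply pow_lt; lra).
      destruct (Rle_lt_dec (u1 / 2) u) as [h|h].
      + eapply Rle_trans; [|apply hbase; lra]. rewrite <- (Rmult_1_r c0) at 2. apply Rmult_le_compat_l; [lra|].
        rewrite <- exp_0. apply exp_le. assert (ln u <= ln u1) by (apply ln_le'; lra). nra.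
      + assert (hu0 : 0 < u) by lra.
        assert (h2 : u1 / 2 ^ S k <= 2 * u <= u1).
        { split; [|lra]. replace (u1 / 2 ^ S k) with (2 * (u1 / 2 ^ S (S k))) by (simpl; field; assert (0 < 2^k) by (apply pow_lt; lra); repeat split; lra). lra. }
        specialize (IHk (2 * u) h2). eapply Rle_trans; [|apply hstep; lra].
        rewrite ln_mult in IHk by lra. unfold q.
        replace (c0 * exp (eta * (ln u - ln u1))) with (exp (- eta * ln 2) * (c0 * exp (eta * (ln 2 + ln u - ln u1)))).
        apply Rmult_le_compat_l. apply Rlt_le, exp_pos. auto.
        replace (eta * (ln 2 + ln u - ln u1)) with (eta * ln 2 + eta * (ln u - ln u1)) by ring.
        rewrite exp_plus. replace (- eta * ln 2) with (- (eta * ln 2)) by ring. rewrite exp_Ropp.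
        field. pose proof (exp_pos (eta * ln 2)); lra. }
  exists (c0 * exp (- eta * ln u1)), u1. split; [apply Rmult_lt_0_compat; auto; apply exp_pos|]. split; auto.
  intros u hu.
  destruct (nat_large (u1 / u)) as [k hk]. specialize (hk k (le_n k)).
  assert (hk2 : u1 / 2 ^ S k <= u).
  { assert (INR k <= 2 ^ k) by apply INR_le_pow2. assert (0 < 2 ^ S k) by (apply pow_lt; lra).
    apply (Rmult_le_reg_r (2 ^ S k)); auto. unfold Rdiv. rewrite Rmult_assoc, Rinv_l, Rmult_1_r by lra.
    simpl. assert (u1 < u * INR k).
    { apply (Rmult_lt_compat_r u) in hk; [|lra]. unfold Rdiv in hk. rewrite Rmult_assoc, Rinv_l in hk by lra. lra. }
    nra. }
  specialize (hind k u (conj hk2 (proj2 hu))).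
  rewrite hL by lra. rewrite hRp by lra.
  replace ((gamma + eta) * ln u) with (gamma * ln u + eta * ln u) by ring. rewrite exp_plus.
  replace (c0 * exp (- eta * ln u1) * (exp (gamma * ln u) * exp (eta * ln u))) with
    (exp (gamma * ln u) * (c0 * exp (eta * (ln u - ln u1)))).
  apply Rmult_le_compat_l. apply Rlt_le, exp_pos. auto.
  replace (eta * (ln u - ln u1)) with (eta * ln u + - eta * ln u1) by ring. rewrite exp_plus. ring.
Qed.

Lemma exp_pow_n x n : exp x ^ n = exp (INR n * x).
Proof. induction n. simpl; rewrite Rmult_0_l, exp_0; auto. rewrite S_INR. simpl. rewrite IHn, <- exp_plus. f_equal; ring. Qed.

Lemma one_minus_pow p M : 0 <= p <= 1 -> (1 - p) ^ M <= exp (- (p * INR M)).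
Proof.
  intro h. replace (- (p * INR M)) with (INR M * - p) by ring. rewrite <- exp_pow_n.
  apply pow_incr. split; [lra|]. pose proof (exp_ineq1_le (- p)). lra.
Qed.

Lemma pow_exp_ln x n : 0 < x -> x ^ n = exp (INR n * ln x).
Proof. intro h. rewrite <- Rpower_pow by auto. reflexivity. Qed.

Lemma cb_len_R d' k : (1 <= k)%nat -> exp (INR (S d') * ln (INR k)) <= INR (length (cb_sites d' k)).
Proof.
  intro hk. assert (0 < INR k) by (apply lt_0_INR; lia).
  rewrite <- pow_exp_ln by auto. eapply Rle_trans; [|apply le_INR, cb_len].
  rewrite mult_INR, pow_INR. rewrite <- tech_pow_Rmult. rewrite (Rmult_comm (INR k)).
  apply Rmult_le_compat_r. lra.
  apply pow_incr. split; [lra|]. rewrite plus_INR, mult_INR. simpl. lra.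
Qed.

Lemma part1 d' P W F gamma : (1 <= d')%nat -> iid_conductances (S d') P W F -> 0 < gamma ->
  regularly_varying_at_0 F gamma ->
  forall delta, 0 < delta ->
       almost_surely P (fun o => exists N : nat, forall n : nat, (N <= n)%nat ->
         lambda1_le (S d') n (fun x i => W x i o)
           (Rpower (INR n) (- (1 / (2 * gamma)) + delta))).
Proof.
  intros hd' HI hg hreg delta hdelta.
  set (d := S d').
  destruct (F_props d' P W F HI) as [hF01 hFmono].
  set (d0 := Rmin delta (1 / (4 * gamma))).
  assert (hd0 : 0 < d0) by (unfold d0; apply Rmin_case; auto; apply Rdiv_lt_0_compat; lra).
  assert (hd0a : d0 <= 1 / (4 * gamma)) by apply Rmin_r.
  assert (hd0b : d0 <= delta) by apply Rmin_l.
  set (a := - (1 / (2 * gamma)) + d0).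
  assert (ha : a < 0).
  { unfold a. assert (1 / (4 * gamma) < 1 / (2 * gamma)).
    { apply Rmult_lt_compat_l; [lra|]. apply Rinv_lt_contravar; nra. } lra. }
  set (eta := d0 * gamma * gamma).
  assert (heta : 0 < eta) by (unfold eta; repeat apply Rmult_lt_0_compat; auto).
  destruct (potter F gamma eta hg heta (fun u => proj1 (hF01 u)) hFmono hreg) as [c [u0 [hc [hu0 hpot]]]].
  assert (hdR : 1 <= INR d) by (apply (le_INR 1); unfold d; lia).
  set (e := 2 * INR d * (gamma + eta) * a + INR d).
  assert (he : INR d * d0 * gamma <= e).
  { assert (e = INR d * d0 * gamma + 2 * INR d * eta * d0) by (unfold e, a, eta; field; lra).
    assert (0 <= 2 * INR d * eta * d0) by (repeat apply Rmult_le_pos; lra). lra. }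
  assert (he0 : 0 < e) by (pose proof (Rmult_lt_0_compat _ _ (Rmult_lt_0_compat _ _ (ltac:(lra) : 0 < INR d) hd0) hg); lra).
  set (A := 2 * INR d * ln c - 2 * INR d * (gamma + eta) * ln (2 * INR d)).
  set (B := exp A * e * e / 4).
  assert (hB : 0 < B) by (unfold B; pose proof (exp_pos A); apply Rdiv_lt_0_compat; [|lra]; repeat apply Rmult_lt_0_compat; auto).
  set (Lb := Rmax 1 (Rmax (4 / B) (Rabs (ln u0) / - a))).
  destruct (nat_large (exp Lb)) as [N0' hN0'].
  set (N0 := S N0').
  set (t := fun k : nat => Rpower (INR k) a / (2 * INR d)).
  set (tau := fun N : nat => exp (- 1 * ln (INR (N0 + N))) / 1).
  assert (hterm : forall k, (N0 <= k)%nat ->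
     (1 - F (t k) ^ (2 * S d')) ^ length (cb_sites d' k) <= exp (- (1 + 1) * ln (INR k + 1))).
  { intros k hk. specialize (hN0' k ltac:(unfold N0 in hk; lia)).
    assert (hk0 : 0 < INR k) by (pose proof (exp_pos Lb); lra).
    set (L := ln (INR k)).
    assert (hL : Lb < L) by (unfold L; rewrite <- (ln_exp Lb); apply ln_increasing; auto; apply exp_pos).
    assert (hLb1 : 1 <= Lb) by apply Rmax_l.
    assert (hL1 : 1 <= L) by lra.
    assert (hL2 : 4 / B <= L) by (pose proof (Rmax_l (4 / B) (Rabs (ln u0) / - a)); pose proof (Rmax_r 1 (Rmax (4 / B) (Rabs (ln u0) / - a))); fold Lb in H0; lra).
    assert (hL3 : Rabs (ln u0) / - a <= L) by (pose proof (Rmax_r (4 / B) (Rabs (ln u0) / - a)); pose proof (Rmax_r 1 (Rmax (4 / B) (Rabs (ln u0) / - a))); fold Lb in H0; lra).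
    assert (ht : t k = exp (a * L - ln (2 * INR d))).
    { unfold t, Rpower. unfold Rminus. rewrite exp_plus, exp_Ropp, exp_ln by lra. fold L. reflexivity. }
    assert (htpos : 0 < t k) by (rewrite ht; apply exp_pos).
    assert (hlnt : ln (t k) = a * L - ln (2 * INR d)) by (rewrite ht, ln_exp; auto).
    assert (htu0 : t k <= u0).
    { rewrite ht. rewrite <- (exp_ln u0) by auto. apply exp_le.
      assert (ln (2 * INR d) >= 0). { rewrite <- ln_1. apply Rle_ge, ln_le'; lra. }
      assert (Rabs (ln u0) <= - a * L).
      { apply (Rmult_le_compat_r (- a)) in hL3; [|lra]. unfold Rdiv in hL3. rewrite Rmult_assoc, Rinv_l, Rmult_1_r in hL3 by lra. lra. }
      pose proof (Rle_abs (- ln u0)). rewrite Rabs_Ropp in H1. lra. }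
    assert (hp1 := hpot (t k) (conj htpos htu0)).
    set (p := F (t k) ^ (2 * S d')).
    assert (hp01 : 0 <= p <= 1).
    { unfold p. split. apply pow_le, hF01. rewrite <- (pow1 (2 * S d')). apply pow_incr. apply hF01. }
    eapply Rle_trans. apply one_minus_pow; auto. apply exp_le.
    replace (- (1 + 1) * ln (INR k + 1)) with (- ((1 + 1) * ln (INR k + 1))) by ring. apply Ropp_le_contravar.
    assert (hplow : exp (A + e * L) <= p * INR (length (cb_sites d' k))).
    { assert (hlen := cb_len_R d' k ltac:(unfold N0 in hk; lia)). fold d in hlen. fold L in hlen.
      assert (hpl : exp (2 * INR d * ln c + 2 * INR d * (gamma + eta) * ln (t k)) <= p).
      { unfold p. replace (2 * INR d * ln c + 2 * INR d * (gamma + eta) * ln (t k)) with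
          (INR (2 * S d') * (ln c + (gamma + eta) * ln (t k))) by (unfold d; rewrite mult_INR; simpl; ring).
        rewrite <- exp_pow_n. apply pow_incr. split. apply Rlt_le, exp_pos.
        rewrite exp_plus, exp_ln by auto. auto. }
      replace (A + e * L) with ((2 * INR d * ln c + 2 * INR d * (gamma + eta) * ln (t k)) + INR d * L).
      2:{ rewrite hlnt. unfold A, e. ring. }
      rewrite exp_plus. apply Rmult_le_compat; auto; apply Rlt_le, exp_pos. }
    eapply Rle_trans; [|apply hplow].
    assert (hlnk1 : ln (INR k + 1) <= ln 2 + L).
    { unfold L. rewrite <- ln_mult by lra. apply ln_le'. lra. assert (1 <= INR k) by (pose proof (exp_ineq1_le Lb); lra). lra. }
    assert (hln2 : ln 2 <= 1) by (pose proof (ln_le_sub1 2 ltac:(lra)); lra).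
    rewrite exp_plus. pose proof (exp_ge_quad (e * L) ltac:(nra)).
    assert (hBL : B * L * L >= 4 * L).
    { apply (Rmult_le_compat_r L) in hL2; [|lra]. apply (Rmult_le_compat_r B) in hL2; [|lra].
      unfold Rdiv in hL2. replace (4 * / B * L * B) with (4 * L) in hL2 by (field; lra). nra. }
    pose proof (exp_pos A).
    assert (exp A * (e * L * (e * L) / 4) <= exp A * exp (e * L)).
    { apply Rmult_le_compat_l; [lra|]. assert (0 <= e * L) by nra. nra. }
    assert (exp A * (e * L * (e * L) / 4) = B * L * L) by (unfold B; field).
    lra. }
  assert (Htele := tele_tau 1 (fun k => (1 - F (t k) ^ (2 * S d')) ^ length (cb_sites d' k)) N0 ltac:(lra) ltac:(unfold N0; lia) hterm).
  destruct Htele as [Hs Ht].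
  assert (H := scheme d' P W F HI (fun k => t (N0 + k)%nat) (fun k => (N0 + k)%nat) tau Hs Ht).
  destruct H as [E [hE1 [hE2 hE3]]]. exists E; split; auto; split; auto.
  intros o ho. destruct (hE3 o ho) as [K hK]. exists (N0 + K)%nat. intros n hn.
  specialize (hK (n - N0)%nat ltac:(lia) n ltac:(lia)).
  replace (N0 + (n - N0))%nat with n in hK by lia.
  eapply lambda1_le_mono; [apply hK|]. unfold t. fold d.
  replace (2 * INR d * (Rpower (INR n) a / (2 * INR d))) with (Rpower (INR n) a) by (field; lra).
  apply Rle_Rpower. apply (le_INR 1); unfold N0 in hn; lia. unfold a; lra.
Qed.

Lemma cb_len_R2 d' j : exp (INR d' * ln 2 + INR (S d') * (INR j * ln 2)) <= INR (length (cb_sites d' (Nat.pow 2 j))).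
Proof.
  eapply Rle_trans; [|apply le_INR, cb_len].
  rewrite mult_INR, pow_INR, plus_INR, mult_INR, pow_INR.
  replace (INR 2) with 2 by (simpl; ring). replace (INR 1) with 1 by (simpl; ring).
  assert (hm : 2 ^ j = exp (INR j * ln 2)) by (apply pow_exp_ln; lra).
  rewrite hm.
  assert (h2 : exp (INR d' * ln 2 + INR (S d') * (INR j * ln 2)) = (2 * exp (INR j * ln 2)) ^ d' * exp (INR j * ln 2)).
  { rewrite pow_exp_ln by (pose proof (exp_pos (INR j * ln 2)); lra).
    rewrite ln_mult, ln_exp by (try apply exp_pos; lra). rewrite <- exp_plus. f_equal. rewrite S_INR. ring. }
  rewrite h2. apply Rmult_le_compat_r. apply Rlt_le, exp_pos.
  apply pow_incr. split. pose proof (exp_pos (INR j * ln 2)); lra. lra.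
Qed.

Lemma ln_ln2_bounds : -1 <= ln (ln 2) < 0.
Proof.
  pose proof ln_lt_2. assert (hl2 : ln 2 < 1).
  { pose proof (ln_le_sub1 2 ltac:(lra)). assert (ln 2 <> 1).
    { intro h. assert (exp (ln 2) = exp 1) by (rewrite h; auto). rewrite exp_ln in H1 by lra.
      pose proof (exp_ge_quad 1 ltac:(lra)). lra. } lra. }
  split.
  - assert (ln (/ 2) <= ln (ln 2)) by (apply ln_le'; lra). rewrite ln_Rinv in H0 by lra. lra.
  - rewrite <- ln_1. apply ln_increasing; lra.
Qed.

Lemma part2 d' P W F gamma : (1 <= d')%nat -> iid_conductances (S d') P W F -> 0 < gamma ->
    ((F 0 = 0 /\ forall a, 0 < a <= 1 -> F a = Rpower a gamma) ->
     forall eps, 0 < eps ->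
       almost_surely P (fun o => exists N : nat, forall n : nat, (N <= n)%nat ->
         lambda1_le (S d') n (fun x i => W x i o)
           (2 * INR (S d') * Rpower (INR n) (- (1 / (2 * gamma)))
              * Rpower ((2 + eps) * ln (ln (INR n))) (1 / (2 * INR (S d') * gamma))))).
Proof.
  intros hd' HI hg [_ hF] eps heps.
  set (d := S d'). fold d.
  assert (hdR : 2 <= INR d) by (apply (le_INR 2); unfold d; lia).
  pose proof ln_lt_2 as hln2. pose proof ln_ln2_bounds as hlnln2.
  assert (hln2' : ln 2 < 1) by (pose proof (Rle_lt_trans _ _ _ (proj1 hlnln2) (proj2 hlnln2)); 
    destruct (Rlt_le_dec (ln 2) 1) as [h|h]; auto; exfalso; assert (ln 1 <= ln (ln 2)) by (apply ln_le'; lra); rewrite ln_1 in H0; lra).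
  set (T1 := fun j : nat => - (1 / (2 * gamma)) * ((INR j + 1) * ln 2)).
  set (L2 := fun j : nat => ln (INR j * ln 2)).
  set (T2 := fun j : nat => 1 / (2 * INR d * gamma) * ln ((2 + eps) * L2 j)).
  set (t := fun j : nat => exp (T1 j + T2 j)).
  pose proof (Rmax_l (8 / eps + 3) (Rmax 4 (ln (2 + eps)))) as hLb1.
  pose proof (Rmax_r (8 / eps + 3) (Rmax 4 (ln (2 + eps)))) as hLb0.
  pose proof (Rmax_l 4 (ln (2 + eps))) as hLb2. pose proof (Rmax_r 4 (ln (2 + eps))) as hLb3.
  set (Lb := Rmax (8 / eps + 3) (Rmax 4 (ln (2 + eps)))) in *.
  destruct (nat_large (exp Lb)) as [N0' hN0'].
  set (N0 := S N0').
  assert (hfacts : forall j, (N0 <= j)%nat ->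
     let Lk := ln (INR j) in Lb < Lk /\ 1 + 2 * Lk <= INR j /\ 0 < L2 j /\ Lk - 1 <= L2 j <= Lk).
  { intros j hj Lk. specialize (hN0' j ltac:(unfold N0 in hj; lia)).
    assert (hj0 : 0 < INR j) by (pose proof (exp_pos Lb); lra).
    assert (hLk : Lb < Lk) by (unfold Lk; rewrite <- (ln_exp Lb); apply ln_increasing; auto; apply exp_pos).
    assert (hjq : 1 + 2 * Lk <= INR j).
    { assert (hLk0 : 0 <= Lk) by lra. pose proof (exp_ge_quad Lk hLk0).
      assert (exp Lk = INR j) by (unfold Lk; apply exp_ln; auto). nra. }
    assert (hL2 : L2 j = Lk + ln (ln 2)) by (unfold L2, Lk; apply ln_mult; lra).
    split; auto. split; auto. split. unfold L2. rewrite <- ln_1. apply ln_increasing; nra. lra. }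
  assert (hFt : forall j, (N0 <= j)%nat -> 0 < t j <= 1).
  { intros j hj. destruct (hfacts j hj) as [hLk [hjq [hL2p hL2]]]. split. apply exp_pos.
    unfold t. rewrite <- exp_0. apply exp_le.
    assert (hlnL2 : ln (L2 j) <= L2 j - 1) by (apply ln_le_sub1; auto).
    assert (ln ((2 + eps) * L2 j) <= INR d * ((INR j + 1) * ln 2)).
    { rewrite ln_mult by lra. assert (h1 : 1 <= INR d * ln 2) by nra.
      assert (0 <= INR j) by apply pos_INR.
      assert (INR j + 1 <= (INR j + 1) * (INR d * ln 2)) by nra.
      replace (INR d * ((INR j + 1) * ln 2)) with ((INR j + 1) * (INR d * ln 2)) by ring. lra. }
    unfold T1, T2. assert (0 < 2 * INR d * gamma) by nra.
    apply (Rmult_le_reg_l (2 * INR d * gamma)); auto. rewrite Rmult_0_r.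
    replace (2 * INR d * gamma * (- (1 / (2 * gamma)) * ((INR j + 1) * ln 2) + 1 / (2 * INR d * gamma) * ln ((2 + eps) * L2 j)))
      with (- (INR d * ((INR j + 1) * ln 2)) + ln ((2 + eps) * L2 j)) by (field; lra). lra. }
  set (r := eps / 4).
  assert (hterm : forall k, (N0 <= k)%nat ->
     (1 - F (t k) ^ (2 * S d')) ^ length (cb_sites d' (Nat.pow 2 k)) <= exp (- (r + 1) * ln (INR k + 1))).
  { intros k hk. destruct (hfacts k hk) as [hLk [hjq [hL2p hL2]]]. set (Lk := ln (INR k)) in *.
    destruct (hFt k hk) as [ht0 ht1].
    assert (hp : F (t k) ^ (2 * S d') = exp (- (INR d * ((INR k + 1) * ln 2)) + ln ((2 + eps) * L2 k))).
    { rewrite hF by auto. unfold Rpower, t. rewrite ln_exp. rewrite exp_pow_n. f_equal.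
      rewrite mult_INR. fold d. replace (INR 2) with 2 by (simpl; ring). unfold T1, T2. field; lra. }
    set (p := F (t k) ^ (2 * S d')).
    assert (hp01 : 0 <= p <= 1).
    { unfold p. rewrite hF by auto. split. apply pow_le, Rlt_le, exp_pos.
      rewrite <- (pow1 (2 * S d')). apply pow_incr. split. apply Rlt_le, exp_pos.
      unfold Rpower. rewrite <- exp_0. apply exp_le. assert (ln (t k) <= 0) by (rewrite <- ln_1; apply ln_le'; lra). nra. }
    eapply Rle_trans. apply one_minus_pow; auto. apply exp_le.
    replace (- (r + 1) * ln (INR k + 1)) with (- ((r + 1) * ln (INR k + 1))) by ring. apply Ropp_le_contravar.
    assert (hpl : (2 + eps) * L2 k / 2 <= p * INR (length (cb_sites d' (Nat.pow 2 k)))).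
    { eapply Rle_trans; [|apply Rmult_le_compat_l; [lra|apply cb_len_R2]].
      unfold p; rewrite hp. rewrite <- exp_plus.
      replace (- (INR d * ((INR k + 1) * ln 2)) + ln ((2 + eps) * L2 k) + (INR d' * ln 2 + INR (S d') * (INR k * ln 2)))
        with (ln ((2 + eps) * L2 k) - ln 2) by (unfold d; rewrite S_INR; ring).
      unfold Rminus. rewrite exp_plus, exp_Ropp, !exp_ln by nra. lra. }
    eapply Rle_trans; [|apply hpl].
    assert (hlnk1 : ln (INR k + 1) <= 1 + Lk).
    { unfold Lk. assert (ln (INR k + 1) <= ln (2 * INR k)) by (apply ln_le'; lra).
      rewrite ln_mult in H by lra. lra. }
    assert (hLk8 : 8 / eps + 3 <= Lk) by lra.
    assert (eps * Lk >= 8 + 3 * eps).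
    { apply (Rmult_le_compat_l eps) in hLk8; [|lra]. replace (eps * (8 / eps + 3)) with (8 + 3 * eps) in hLk8 by (field; lra). lra. }
    unfold r. assert (0 <= ln (INR k + 1)) by (rewrite <- ln_1; apply ln_le'; lra). nra. }
  assert (Htele := tele_tau r (fun k => (1 - F (t k) ^ (2 * S d')) ^ length (cb_sites d' (Nat.pow 2 k))) N0 ltac:(unfold r; lra) ltac:(unfold N0; lia) hterm).
  destruct Htele as [Hs Ht].
  assert (H := scheme d' P W F HI (fun k => t (N0 + k)%nat) (fun k => Nat.pow 2 (N0 + k)) _ Hs Ht).
  destruct H as [E [hE1 [hE2 hE3]]]. exists E; split; auto; split; auto.
  intros o ho. destruct (hE3 o ho) as [K hK]. exists (Nat.pow 2 (N0 + K)). intros n hn.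
  assert (hn0 : (0 < n)%nat) by (pose proof (Nat.pow_nonzero 2 (N0 + K) ltac:(lia)); lia).
  set (j := Nat.log2 n).
  assert (hj : (N0 + K <= j)%nat) by (unfold j; rewrite <- (Nat.log2_pow2 (N0 + K)) by lia; apply Nat.log2_le_mono; auto).
  destruct (Nat.log2_spec n hn0) as [hj1 hj2]. fold j in hj1, hj2.
  specialize (hK (j - N0)%nat ltac:(lia) n). replace (N0 + (j - N0))%nat with j in hK by lia.
  specialize (hK hj1). eapply lambda1_le_mono; [apply hK|].
  destruct (hfacts j ltac:(lia)) as [hLk [hjq [hL2p hL2]]].
  assert (hnR : 0 < INR n) by (apply lt_0_INR; lia).
  assert (hlnn1 : INR j * ln 2 <= ln (INR n)).
  { rewrite <- ln_pow by lra. apply ln_le'. apply pow_lt; lra.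
    assert (h2j : INR (Nat.pow 2 j) = 2 ^ j) by (rewrite pow_INR; f_equal; simpl; ring).
    rewrite <- h2j. apply le_INR; auto. }
  assert (hlnn2 : ln (INR n) <= (INR j + 1) * ln 2).
  { rewrite <- S_INR, <- ln_pow by lra. apply ln_le'; auto.
    assert (h2j : INR (Nat.pow 2 (S j)) = 2 ^ (S j)) by (rewrite pow_INR; f_equal; simpl; ring).
    rewrite <- h2j. apply le_INR; lia. }
  unfold t. rewrite exp_plus.
  match goal with |- _ <= 2 * INR d * ?X * ?Y => replace (2 * INR d * X * Y) with (2 * INR d * (X * Y)) by ring end.
  apply Rmult_le_compat_l; [lra|]. unfold Rpower. apply Rmult_le_compat. apply Rlt_le, exp_pos. apply Rlt_le, exp_pos.
  - apply exp_le. unfold T1. assert (0 < 1 / (2 * gamma)) by (apply Rdiv_lt_0_compat; lra). nra.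
  - apply exp_le. unfold T2. apply Rmult_le_compat_l. apply Rlt_le, Rdiv_lt_0_compat; nra.
    apply ln_le'. nra. apply Rmult_le_compat_l; [lra|]. unfold L2. apply ln_le'; auto. nra.
Qed.

Theorem corollary1p2 :
  forall (d : nat) (P : prob_space) (W : pt -> nat -> Omega P -> R)
         (F : R -> R) (gamma : R),
    (2 <= d)%nat ->
    iid_conductances d P W F ->
    0 < gamma ->
    regularly_varying_at_0 F gamma ->
    (forall delta, 0 < delta ->
       almost_surely P (fun o => exists N : nat, forall n : nat, (N <= n)%nat ->
         lambda1_le d n (fun x i => W x i o)
           (Rpower (INR n) (- (1 / (2 * gamma)) + delta))))
    /\
    ((F 0 = 0 /\ forall a, 0 < a <= 1 -> F a = Rpower a gamma) ->
     forall eps, 0 < eps ->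
       almost_surely P (fun o => exists N : nat, forall n : nat, (N <= n)%nat ->
         lambda1_le d n (fun x i => W x i o)
           (2 * INR d * Rpower (INR n) (- (1 / (2 * gamma)))
              * Rpower ((2 + eps) * ln (ln (INR n))) (1 / (2 * INR d * gamma))))).
Proof.
  intros d P W F gamma hd HI hg hreg.
  destruct d as [|d']; [lia|].
  split.
  - apply (part1 d' P W F gamma); auto; lia.
  - apply (part2 d' P W F gamma); auto; lia.
Qed.
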